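(* Let $\mathcal{L} \subseteq \mathcal{P}(\mathbb{N})$ be a class of languages. The following are equivalent: (i) every $L\in\mathcal L$ is finite; (ii) $\mathcal{L} \in [\tau(\mathbf{Caut}_{\mathbf{Tar}})\mathbf{Txt}\mathbf{Sd}\mathbf{Ex}]$; (iii) $\mathcal{L} \in [\tau(\mathbf{Caut}_{\mathbf{Tar}})\mathbf{Txt}\mathbf{G}\mathbf{Bc}]$.
   Context: Fix an acceptable numbering $(\varphi_e)$ of partial computable functions, $W_e=\mathrm{dom}(\varphi_e)$. A text is a total function $T:\mathbb N\to\mathbb N\cup\{\#\}$, $\mathrm{content}(T)=\mathrm{range}(T)\setminus\{\#\}$, $T[n]=(T(0),\dots,T(n-1))$; $\mathbf{Txt}$ is the set of all texts, $\mathbf{Txt}(L)$ those with content $L$. Learners are partial computable functions. $\mathbf G(h,T)(i)=h(T[i])$, $\mathbf{Sd}(h,T)(i)=h(\mathrm{content}(T[i]))$. For total $p:\mathbb N\to\mathbb N$ and text $T$: $\mathbf{Ex}(p,T)$ iff $\exists n_0\,\forall n\ge n_0: p(n)=p(n_0)\wedge W_{p(n_0)}=\mathrm{content}(T)$; $\mathbf{Bc}(p,T)$ iff $\exists n_0\,\forall n\ge n_0: W_{p(n)}=\mathrm{content}(T)$; $\mathbf{Caut}_{\mathbf{Tar}}(p,T)$ iff for all $n$ it is not the case that $\mathrm{content}(T)\subsetneq W_{p(n)}$. A learner $h$ $\tau(\alpha)\mathbf{Txt}\beta\delta$-learns $L$ iff for every text $T\in\mathbf{Txt}$, $\beta(h,T)$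 is total and $\alpha(\beta(h,T),T)$ holds, and for every $T\in\mathbf{Txt}(L)$, $\delta(\beta(h,T),T)$ holds. $[\tau(\alpha)\mathbf{Txt}\beta\delta]$ is the set of all classes $\mathcal L$ such that some learner $\tau(\alpha)\mathbf{Txt}\beta\delta$-learns every $L\in\mathcal L$. *)

(* Defs.v *)
From Stdlib Require Import Arith List.
Import ListNotations.

Inductive code : Type :=
| CZero : code
| CSucc : code
| CProj : nat -> code
| CComp : code -> list code -> code
| CPrec : code -> code -> code
| CMu   : code -> code.

Inductive eval : code -> list nat -> nat -> Prop :=
| eZero args : eval CZero args 0
| eSucc args : eval CSucc args (S (hd 0 args))
| eProj i args : eval (CProj i) args (nth i args 0)
| eComp f gs args ys y :
    evals gs args ys -> eval f ys y -> eval (CComp f gs) args y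
| ePrec0 f g args y :
    eval f args y -> eval (CPrec f g) (0 :: args) y
| ePrecS f g n args r y :
    eval (CPrec f g) (n :: args) r -> eval g (n :: r :: args) y ->
    eval (CPrec f g) (S n :: args) y
| eMu f args n :
    eval f (n :: args) 0 ->
    (forall m, m < n -> exists k, eval f (m :: args) (S k)) ->
    eval (CMu f) args n
with evals : list code -> list nat -> list nat -> Prop :=
| esNil args : evals [] args []
| esCons g gs args y ys :
    eval g args y -> evals gs args ys -> evals (g :: gs) args (y :: ys).

Definition cpair (a b : nat) : nat := (a + b) * S (a + b) / 2 + b.

Fixpoint encode (c : code) : nat :=
  match c with
  | CZero => cpair 0 0
  | CSucc => cpair 1 0
  | CProj i => cpair 2 i
  | CComp f gs =>
      cpair 3 (cpair (encode f)
                 ((fix encl (l : list code) : nat :=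
                     match l with
                     | [] => 0
                     | g :: l' => S (cpair (encode g) (encl l'))
                     end) gs))
  | CPrec f g => cpair 4 (cpair (encode f) (encode g))
  | CMu f => cpair 5 (encode f)
  end.

(* Standard Goedel numbering of the unary partial computable functions:
   phi e x = y.  Numbers that encode no program denote the empty function. *)
Definition phi (e x y : nat) : Prop :=
  exists c, encode c = e /\ eval c [x] y.

Definition total_computable (f : nat -> nat) : Prop :=
  exists c, forall x, eval c [x] (f x).

(* A numbering psi (psi e x y : "psi_e(x) = y") is acceptable iff there are
   computable translations in both directions with the standard numbering. *)
Definition acceptable (psi : nat -> nat -> nat -> Prop) : Prop :=
  (exists t, total_computable t /\ forall e x y, psi e x y <-> phi (t e) x y) /\
  (exists s, total_computable s /\ forall e x y, phi e x y <-> psi (s e) x y).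

Definition W (psi : nat -> nat -> nat -> Prop) (e : nat) : nat -> Prop :=
  fun x => exists y, psi e x y.

(* None plays the role of the pause symbol # *)
Definition text := nat -> option nat.

Definition content (T : text) : nat -> Prop := fun x => exists n, T n = Some x.

Definition prefix (T : text) (n : nat) : list (option nat) := map T (seq 0 n).

Definition enc_opt (a : option nat) : nat :=
  match a with None => 0 | Some x => S x end.
Fixpoint code_seq (l : list (option nat)) : nat :=
  match l with
  | [] => 0
  | a :: l' => S (cpair (enc_opt a) (code_seq l'))
  end.

Fixpoint somes (l : list (option nat)) : list nat :=
  match l with
  | [] => []
  | None :: l' => somes l'
  | Some x :: l' => x :: somes l'
  end.
Definition canon_index (l : list (option nat)) : nat :=
  fold_right (fun x acc => 2 ^ x + acc) 0 (nodup Nat.eq_dec (somes l)).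

(* A learner is a partial computable function, given by a program h.
   beta h T p : the (total) learning sequence of h on T is p. *)
Definition interaction := code -> text -> (nat -> nat) -> Prop.

Definition G_op : interaction :=
  fun h T p => forall i, eval h [code_seq (prefix T i)] (p i).

Definition Sd_op : interaction :=
  fun h T p => forall i, eval h [canon_index (prefix T i)] (p i).

Definition criterion := (nat -> nat) -> text -> Prop.

Definition set_eq (A B : nat -> Prop) : Prop := forall x, A x <-> B x.
Definition subset (A B : nat -> Prop) : Prop := forall x, A x -> B x.

Definition Ex_crit (psi : nat -> nat -> nat -> Prop) : criterion :=
  fun p T => exists n0, forall n, n0 <= n ->
    p n = p n0 /\ set_eq (W psi (p n0)) (content T).

Definition Bc_crit (psi : nat -> nat -> nat -> Prop) : criterion :=
  fun p T => exists n0, forall n, n0 <= n -> set_eq (W psi (p n)) (content T).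

Definition CautTar (psi : nat -> nat -> nat -> Prop) : criterion :=
  fun p T => forall n,
    ~ (subset (content T) (W psi (p n)) /\ ~ subset (W psi (p n)) (content T)).

Definition learns (alpha : criterion) (beta : interaction) (delta : criterion)
  (h : code) (L : nat -> Prop) : Prop :=
  (forall T : text, exists p, beta h T p /\ alpha p T) /\
  (forall T : text, set_eq (content T) L -> exists p, beta h T p /\ delta p T).

Definition learnable (alpha : criterion) (beta : interaction) (delta : criterion)
  (Lcal : (nat -> Prop) -> Prop) : Prop :=
  exists h : code, forall L, Lcal L -> learns alpha beta delta h L.

Definition finite_lang (L : nat -> Prop) : Prop :=
  exists s : list nat, forall x, L x <-> In x s.

(* Main.v *)
Require Import Defs.
From Stdlib Require Import Arith Lia List Bool Classical ClassicalEpsilon.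
Import ListNotations.

Fixpoint eval_det c a y (H : eval c a y) {struct H} : forall y', eval c a y' -> y = y'
with evals_det gs a ys (H : evals gs a ys) {struct H} : forall ys', evals gs a ys' -> ys = ys'.
Proof.
  - destruct H; intros y' H'.
    + inversion H'; reflexivity.
    + inversion H'; reflexivity.
    + inversion H'; reflexivity.
    + inversion H' as [| | |f' gs' args' ys' y'' Hs Hf| | |]; subst.
      pose proof (evals_det _ _ _ H _ Hs); subst.
      exact (eval_det _ _ _ H0 _ Hf).
    + inversion H' as [| | | |f' g' args' y'' Hf| |]; subst. exact (eval_det _ _ _ H _ Hf).
    + inversion H' as [| | | | |f' g' n' args' r' y'' Hr Hg|]; subst.
      pose proof (eval_det _ _ _ H _ Hr); subst.
      exact (eval_det _ _ _ H0 _ Hg).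
    + inversion H' as [| | | | | |f' args' n' Hf Hlt]; subst.
      destruct (lt_eq_lt_dec n y') as [[Hl|Hl]|Hl].
      * destruct (Hlt n Hl) as [k Hk].
        pose proof (eval_det _ _ _ H _ Hk). discriminate.
      * exact Hl.
      * destruct (H0 y' Hl) as [k Hk].
        pose proof (eval_det _ _ _ Hk _ Hf). discriminate.
  - destruct H; intros ys' H'.
    + inversion H'; reflexivity.
    + inversion H' as [|g' gs' args' y' ys'' Hg Hgs]; subst.
      pose proof (eval_det _ _ _ H _ Hg); subst.
      pose proof (evals_det _ _ _ H0 _ Hgs); subst. reflexivity.
Qed.
Fixpoint tri n := match n with 0 => 0 | S m => tri m + S m end.
Lemma tri_mul n : tri n * 2 = n * S n.
Proof. induction n; simpl; lia. Qed.
Lemma cpair_tri a b : cpair a b = tri (a + b) + b.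
Proof. unfold cpair. rewrite <- tri_mul, Nat.div_mul by lia. reflexivity. Qed.
Lemma tri_mono m m' : m <= m' -> tri m <= tri m'.
Proof. induction 1; simpl; lia. Qed.
Lemma tri_gap m m' : m < m' -> tri m + m < tri m'.
Proof. intros H. pose proof (tri_mono (S m) m' H). simpl in H0. lia. Qed.
Lemma cpair_inj a b a' b' : cpair a b = cpair a' b' -> a = a' /\ b = b'.
Proof.
  rewrite !cpair_tri. intros E.
  destruct (lt_eq_lt_dec (a+b) (a'+b')) as [[H|H]|H].
  - pose proof (tri_gap _ _ H). lia.
  - rewrite H in E. lia.
  - pose proof (tri_gap _ _ H). lia.
Qed.

Section CI.
Variable P : code -> Prop.
Hypothesis HZ : P CZero.
Hypothesis HS : P CSucc.
Hypothesis HP : forall i, P (CProj i).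
Hypothesis HC : forall f gs, P f -> Forall P gs -> P (CComp f gs).
Hypothesis HR : forall f g, P f -> P g -> P (CPrec f g).
Hypothesis HM : forall f, P f -> P (CMu f).
Fixpoint code_ind' c : P c :=
  match c with
  | CZero => HZ | CSucc => HS | CProj i => HP i
  | CComp f gs => HC f gs (code_ind' f)
      ((fix go l : Forall P l := match l with [] => Forall_nil _
          | g :: l' => Forall_cons _ (code_ind' g) (go l') end) gs)
  | CPrec f g => HR f g (code_ind' f) (code_ind' g)
  | CMu f => HM f (code_ind' f)
  end.
End CI.

Fixpoint encl (l : list code) : nat :=
  match l with [] => 0 | g :: l' => S (cpair (encode g) (encl l')) end.

Lemma encode_eq c : encode c = match c with
  | CZero => cpair 0 0 | CSucc => cpair 1 0 | CProj i => cpair 2 i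
  | CComp f gs => cpair 3 (cpair (encode f) (encl gs))
  | CPrec f g => cpair 4 (cpair (encode f) (encode g))
  | CMu f => cpair 5 (encode f) end.
Proof. destruct c; reflexivity. Qed.

Lemma encode_inj c1 : forall c2, encode c1 = encode c2 -> c1 = c2.
Proof.
  induction c1 using code_ind'; intros c2 E; rewrite (encode_eq c2) in E; rewrite encode_eq in E;
   destruct c2; apply cpair_inj in E; destruct E as [E1 E2]; try discriminate; try reflexivity.
  - subst; reflexivity.
  - apply cpair_inj in E2 as [E2 E3]. f_equal; auto.
    clear E2 IHc1. revert l E3. induction H; intros l2 E; destruct l2; simpl in E; try discriminate; auto.
    injection E as E. apply cpair_inj in E as [E E']. f_equal; auto.
  - apply cpair_inj in E2 as [E2 E3]. f_equal; auto.
  - f_equal; auto.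
Qed.
Lemma evP0 a l : eval (CProj 0) (a :: l) a.
Proof. exact (eProj 0 (a :: l)). Qed.
Lemma evP1 a b l : eval (CProj 1) (a :: b :: l) b.
Proof. exact (eProj 1 (a :: b :: l)). Qed.
Lemma evP2 a b c l : eval (CProj 2) (a :: b :: c :: l) c.
Proof. exact (eProj 2 (a :: b :: c :: l)). Qed.
Lemma evS n : eval CSucc [n] (S n).
Proof. exact (eSucc [n]). Qed.
Lemma evZ a : eval CZero a 0.
Proof. constructor. Qed.

Definition C1 f g := CComp f [g].
Definition C2 f g h := CComp f [g; h].
Definition C3 f g h i := CComp f [g; h; i].
Lemma ev1 f g a y z : eval g a y -> eval f [y] z -> eval (C1 f g) a z.
Proof. intros; eapply eComp; [repeat constructor; eauto | eauto]. Qed.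
Lemma ev2 f g h a y1 y2 z : eval g a y1 -> eval h a y2 -> eval f [y1;y2] z -> eval (C2 f g h) a z.
Proof. intros; eapply eComp; [repeat constructor; eauto | eauto]. Qed.
Lemma ev3 f g h i a y1 y2 y3 z : eval g a y1 -> eval h a y2 -> eval i a y3 ->
  eval f [y1;y2;y3] z -> eval (C3 f g h i) a z.
Proof. intros; eapply eComp; [repeat constructor; eauto | eauto]. Qed.

Fixpoint K n := match n with 0 => CZero | S m => C1 CSucc (K m) end.
Lemma evK n a : eval (K n) a n.
Proof. induction n; simpl. constructor. eapply ev1; [exact IHn | apply evS]. Qed.

Fixpoint pr1 (c0 : nat) (G : nat -> nat -> nat) n :=
  match n with 0 => c0 | S m => G m (pr1 c0 G m) end.
Fixpoint pr2 (F : nat -> nat) (G : nat -> nat -> nat -> nat) n y :=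
  match n with 0 => F y | S m => G m (pr2 F G m y) y end.
Definition prec1 f g := C1 (CPrec f g) (CProj 0).
Definition prec2 f g := C2 (CPrec f g) (CProj 0) (CProj 1).
Lemma evprec1 f g c0 G : eval f [] c0 -> (forall n r, eval g [n; r] (G n r)) ->
  forall n, eval (prec1 f g) [n] (pr1 c0 G n).
Proof.
  intros Hf Hg n. eapply ev1; [apply evP0|].
  induction n; simpl. constructor; auto. econstructor; eauto.
Qed.
Lemma evprec2 f g F G : (forall y, eval f [y] (F y)) -> (forall n r y, eval g [n; r; y] (G n r y)) ->
  forall n y, eval (prec2 f g) [n; y] (pr2 F G n y).
Proof.
  intros Hf Hg n y. eapply ev2; [apply evP0|apply evP1|].
  induction n; simpl. constructor; auto. econstructor; eauto.
Qed.

Definition cpred := prec1 CZero (CProj 0).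
Lemma ev_pred n : eval cpred [n] (pred n).
Proof.
  replace (pred n) with (pr1 0 (fun n r => n) n) by (destruct n; reflexivity).
  apply evprec1. constructor. intros; apply evP0.
Qed.
Definition cadd := prec2 (CProj 0) (C1 CSucc (CProj 1)).
Lemma ev_add a b : eval cadd [a; b] (a + b).
Proof.
  replace (a + b) with (pr2 (fun y => y) (fun n r y => S r) a b) by (induction a; simpl; auto).
  apply evprec2. intros; apply evP0. intros; eapply ev1; [apply evP1|apply evS].
Qed.
Definition csubR := prec2 (CProj 0) (C1 cpred (CProj 1)).
Definition csub := C2 csubR (CProj 1) (CProj 0).
Lemma ev_sub a b : eval csub [a; b] (a - b).
Proof.
  eapply ev2; [apply evP1|apply evP0|].
  replace (a - b) with (pr2 (fun y => y) (fun n r y => pred r) b a).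
  apply evprec2. intros; apply evP0. intros; eapply ev1; [apply evP1|apply ev_pred].
  induction b; simpl; lia.
Qed.
Definition isz n := match n with 0 => 1 | _ => 0 end.
Definition cisz := prec1 (C1 CSucc CZero) CZero.
Lemma ev_isz n : eval cisz [n] (isz n).
Proof.
  replace (isz n) with (pr1 1 (fun n r => 0) n) by (destruct n; reflexivity).
  apply evprec1. eapply ev1; [apply evZ|apply evS]. intros; apply evZ.
Qed.
Definition cleb := C1 cisz csub.
Lemma ev_leb a b : eval cleb [a; b] (isz (a - b)).
Proof. eapply ev1; [apply ev_sub|apply ev_isz]. Qed.
Definition ceqb := C1 cisz (C2 cadd csub (C2 csub (CProj 1) (CProj 0))).
Lemma ev_eqb a b : eval ceqb [a; b] (isz ((a - b) + (b - a))).
Proof.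
  eapply ev1; [|apply ev_isz]. eapply ev2; [apply ev_sub| |apply ev_add].
  eapply ev2; [apply evP1|apply evP0|apply ev_sub].
Qed.
Definition ctri := prec1 CZero (C2 cadd (CProj 1) (C1 CSucc (CProj 0))).
Lemma ev_tri n : eval ctri [n] (tri n).
Proof.
  replace (tri n) with (pr1 0 (fun n r => r + S n) n) by (induction n; simpl; auto).
  apply evprec1. constructor. intros; eapply ev2; [apply evP1| |apply ev_add].
  eapply ev1; [apply evP0|apply evS].
Qed.

Definition ccpair := C2 cadd (C1 ctri cadd) (CProj 1).
Lemma ev_cpair a b : eval ccpair [a; b] (cpair a b).
Proof.
  rewrite cpair_tri. eapply ev2; [|apply evP1|apply ev_add].
  eapply ev1; [apply ev_add|apply ev_tri].
Qed.
Definition P2 := C2 ccpair.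

Definition prog (Chk : code) (k : nat) := CMu (C3 Chk (CProj 0) (CProj 1) (K k)).

Lemma encode_prog Chk k : encode (prog Chk k) =
  cpair 5 (cpair 3 (cpair (encode Chk) (S (cpair (encode (CProj 0)) (S (cpair (encode (CProj 1))
    (S (cpair (encode (K k)) 0)))))))).
Proof. reflexivity. Qed.
Lemma encode_KS n : encode (K (S n)) = cpair 3 (cpair (encode CSucc) (S (cpair (encode (K n)) 0))).
Proof. reflexivity. Qed.

Definition cencK := prec1 (K (encode CZero))
   (P2 (K 3) (P2 (K (encode CSucc)) (C1 CSucc (P2 (CProj 1) (K 0))))).
Lemma ev_encK n : eval cencK [n] (encode (K n)).
Proof.
  replace (encode (K n)) with
   (pr1 (encode CZero) (fun n r => cpair 3 (cpair (encode CSucc) (S (cpair r 0)))) n).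
  - apply evprec1. apply evK. intros m r.
    eapply ev2; [apply evK| |apply ev_cpair].
    eapply ev2; [apply evK| |apply ev_cpair].
    eapply ev1; [|apply evS].
    eapply ev2; [apply evP1|apply evK|apply ev_cpair].
  - induction n. reflexivity. rewrite encode_KS. cbn [pr1]. rewrite IHn. reflexivity.
Qed.

Definition cenc (Chk : code) : code :=
  P2 (K 5) (P2 (K 3) (P2 (K (encode Chk)) (C1 CSucc (P2 (K (encode (CProj 0)))
    (C1 CSucc (P2 (K (encode (CProj 1))) (C1 CSucc (P2 cencK (K 0))))))))).
Lemma ev_cenc Chk k : eval (cenc Chk) [k] (encode (prog Chk k)).
Proof.
  rewrite encode_prog. unfold cenc.
  eapply ev2; [apply evK| |apply ev_cpair].
  eapply ev2; [apply evK| |apply ev_cpair].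
  eapply ev2; [apply evK| |apply ev_cpair].
  eapply ev1; [|apply evS].
  eapply ev2; [apply evK| |apply ev_cpair].
  eapply ev1; [|apply evS].
  eapply ev2; [apply evK| |apply ev_cpair].
  eapply ev1; [|apply evS].
  eapply ev2; [apply ev_encK|apply evK|apply ev_cpair].
Qed.

Lemma bounded_dec (F : nat -> nat) n : (exists j, j < n /\ F j = 0) \/ (forall j, j < n -> F j <> 0).
Proof.
  induction n. right; lia.
  destruct IHn as [[j [Hj Fj]]|Hno]. left; exists j; split; [lia|auto].
  destruct (Nat.eq_dec (F n) 0). left; exists n; split; [lia|auto].
  right; intros j Hj. destruct (Nat.eq_dec j n). subst; auto. apply Hno; lia.
Qed.
Lemma least_witness (F : nat -> nat) n : F n = 0 -> exists m, F m = 0 /\ forall j, j < m -> F j <> 0.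
Proof.
  induction n as [n IH] using lt_wf_ind. intros H.
  destruct (bounded_dec F n) as [[j [Hj Fj]]|Hno]; [apply (IH j Hj Fj)|exists n; split; auto].
Qed.

Lemma prog_dom Chk F k x : (forall i x, eval Chk [i;x;k] (F i x)) ->
  ((exists y, eval (prog Chk k) [x] y) <-> exists i, F i x = 0).
Proof.
  intros HF.
  assert (Hf : forall i, eval (C3 Chk (CProj 0) (CProj 1) (K k)) [i; x] (F i x)).
  { intros i. eapply ev3; [apply evP0|apply evP1|apply evK|apply HF]. }
  split.
  - intros [y Hy]. inversion Hy as [| | | | | |f' args' n' Hz Hlt]; subst.
    exists y. symmetry. exact (eval_det _ _ _ Hz _ (Hf y)).
  - intros [i Hi]. destruct (least_witness (fun i => F i x) i Hi) as [m [Hm Hlt]].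
    exists m. constructor. pose proof (Hf m) as Hm2; rewrite Hm in Hm2; exact Hm2.
    intros j Hj. specialize (Hlt j Hj). destruct (F j x) eqn:E. congruence.
    exists n. pose proof (Hf j) as Hj2; rewrite E in Hj2; exact Hj2.
Qed.

Lemma W_prog psi (s : nat -> nat) (Hs : forall e x y, phi e x y <-> psi (s e) x y) c x :
  W psi (s (encode c)) x <-> exists y, eval c [x] y.
Proof.
  unfold W. split.
  - intros [y Hy]. apply Hs in Hy. destruct Hy as [c' [E Hc]]. apply encode_inj in E. subst. eauto.
  - intros [y Hy]. exists y. apply Hs. exists c. auto.
Qed.

Lemma mod2_S n : S n mod 2 = isz (n mod 2).
Proof.
  pose proof (Nat.div_mod n 2). pose proof (Nat.div_mod (S n) 2).
  pose proof (Nat.mod_upper_bound n 2). pose proof (Nat.mod_upper_bound (S n) 2).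
  destruct (n mod 2) as [|[|]] eqn:E; cbn [isz]; lia.
Qed.
Lemma div2_S n : S n / 2 = n / 2 + n mod 2.
Proof.
  pose proof (Nat.div_mod n 2). pose proof (Nat.div_mod (S n) 2).
  pose proof (Nat.mod_upper_bound n 2). pose proof (Nat.mod_upper_bound (S n) 2). lia.
Qed.

Definition cpar := prec1 CZero (C1 cisz (CProj 1)).
Lemma ev_par n : eval cpar [n] (n mod 2).
Proof.
  replace (n mod 2) with (pr1 0 (fun _ r => isz r) n).
  apply evprec1. constructor. intros; eapply ev1; [apply evP1|apply ev_isz].
  induction n. reflexivity. cbn [pr1]. rewrite IHn, mod2_S. reflexivity.
Qed.
Definition chalf := prec1 CZero (C2 cadd (CProj 1) (C1 cpar (CProj 0))).
Lemma ev_half n : eval chalf [n] (n / 2).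
Proof.
  replace (n / 2) with (pr1 0 (fun m r => r + m mod 2) n).
  apply evprec1. constructor. intros; eapply ev2; [apply evP1| |apply ev_add].
  eapply ev1; [apply evP0|apply ev_par].
  induction n. reflexivity. cbn [pr1]. rewrite IHn, div2_S. reflexivity.
Qed.
Definition cshift := prec2 (CProj 0) (C1 chalf (CProj 1)).
Lemma ev_shift x k : eval cshift [x; k] (k / 2 ^ x).
Proof.
  replace (k / 2 ^ x) with (pr2 (fun y => y) (fun _ r _ => r / 2) x k).
  apply evprec2. intros; apply evP0. intros; eapply ev1; [apply evP1|apply ev_half].
  induction x. cbn [pr2 Nat.pow]. rewrite Nat.div_1_r. reflexivity.
  cbn [pr2]. rewrite IHx, Nat.Div0.div_div, Nat.pow_succ_r'. f_equal. lia.
Qed.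
Definition Chk2 := C1 cisz (C1 cpar (C2 cshift (CProj 1) (CProj 2))).
Lemma ev_chk2 i x k : eval Chk2 [i; x; k] (isz ((k / 2 ^ x) mod 2)).
Proof.
  eapply ev1; [|apply ev_isz]. eapply ev1; [|apply ev_par].
  eapply ev2; [apply evP1|apply evP2|apply ev_shift].
Qed.
Lemma chk2_spec x k : isz ((k / 2 ^ x) mod 2) = 0 <-> Nat.testbit k x = true.
Proof.
  rewrite Nat.testbit_true. pose proof (Nat.mod_upper_bound (k / 2^x) 2).
  destruct ((k / 2 ^ x) mod 2) as [|[|]]; simpl; split; intros; lia.
Qed.

Definition diag := pr1 0 (fun n r => r + isz (tri (S r) - S n)).
Definition cdiag := prec1 CZero (C2 cadd (CProj 1)
   (C2 cleb (C1 ctri (C1 CSucc (CProj 1))) (C1 CSucc (CProj 0)))).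
Lemma ev_diag k : eval cdiag [k] (diag k).
Proof.
  apply evprec1. constructor. intros n r.
  eapply ev2; [apply evP1| |apply ev_add].
  eapply ev2; [| |apply ev_leb].
  eapply ev1; [|apply ev_tri]. eapply ev1; [apply evP1|apply evS].
  eapply ev1; [apply evP0|apply evS].
Qed.
Lemma diag_spec k : tri (diag k) <= k < tri (S (diag k)).
Proof.
  induction k. simpl. lia.
  unfold diag. cbn [pr1]. fold diag. remember (diag k) as d.
  destruct (tri (S d) - S k) eqn:E; simpl isz.
  - replace (d + 1) with (S d) by lia. cbn [tri] in *. lia.
  - rewrite Nat.add_0_r. cbn [tri] in *. lia.
Qed.
Lemma diag_unique k m : tri m <= k < tri (S m) -> diag k = m.
Proof.
  intros H. pose proof (diag_spec k).
  destruct (lt_eq_lt_dec (diag k) m) as [[Hl|Hl]|Hl]; auto.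
  - pose proof (tri_mono (S (diag k)) m Hl). lia.
  - pose proof (tri_mono (S m) (diag k) Hl). lia.
Qed.
Definition usnd k := k - tri (diag k).
Definition ufst k := diag k - usnd k.
Lemma unpair a b : ufst (cpair a b) = a /\ usnd (cpair a b) = b.
Proof.
  rewrite cpair_tri. assert (diag (tri (a+b) + b) = a + b).
  { apply diag_unique. cbn [tri]. lia. }
  unfold ufst, usnd. rewrite H. lia.
Qed.
Definition csnd := C2 csub (CProj 0) (C1 ctri cdiag).
Lemma ev_snd k : eval csnd [k] (usnd k).
Proof.
  eapply ev2; [apply evP0| |apply ev_sub]. eapply ev1; [apply ev_diag|apply ev_tri].
Qed.
Definition cfst := C2 csub cdiag csnd.
Lemma ev_fst k : eval cfst [k] (ufst k).
Proof. eapply ev2; [apply ev_diag|apply ev_snd|apply ev_sub]. Qed.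
Definition utail k := usnd (pred k).
Definition uhead k := ufst (pred k).
Definition ctail := C1 csnd cpred.
Definition chead := C1 cfst cpred.
Lemma ev_tail k : eval ctail [k] (utail k).
Proof. eapply ev1; [apply ev_pred|apply ev_snd]. Qed.
Lemma ev_head k : eval chead [k] (uhead k).
Proof. eapply ev1; [apply ev_pred|apply ev_fst]. Qed.
Definition uit := pr2 (fun y => y) (fun _ r _ => utail r).
Definition cit := prec2 (CProj 0) (C1 ctail (CProj 1)).
Lemma ev_it i k : eval cit [i; k] (uit i k).
Proof. apply evprec2. intros; apply evP0. intros; eapply ev1; [apply evP1|apply ev_tail]. Qed.

Definition F3 i x k :=
  isz (isz ((uhead (uit i k) - S x) + (S x - uhead (uit i k))) - isz (uit i k)).
Definition ITc := C2 cit (CProj 0) (CProj 2).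
Definition Chk3 := C1 cisz (C2 csub (C2 ceqb (C1 chead ITc) (C1 CSucc (CProj 1))) (C1 cisz ITc)).
Lemma ev_chk3 i x k : eval Chk3 [i; x; k] (F3 i x k).
Proof.
  assert (HI : eval ITc [i; x; k] (uit i k)).
  { eapply ev2; [apply evP0|apply evP2|apply ev_it]. }
  eapply ev1; [|apply ev_isz]. eapply ev2; [| |apply ev_sub].
  eapply ev2; [| |apply ev_eqb]. eapply ev1; [exact HI|apply ev_head].
  eapply ev1; [apply evP1|apply evS].
  eapply ev1; [exact HI|apply ev_isz].
Qed.

Lemma tail_cons o l : utail (code_seq (o :: l)) = code_seq l.
Proof. unfold utail. simpl pred. apply unpair. Qed.
Lemma head_cons o l : uhead (code_seq (o :: l)) = enc_opt o.
Proof. unfold uhead. simpl pred. apply unpair. Qed.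
Lemma tail_nil : utail (code_seq []) = 0.
Proof. reflexivity. Qed.
Lemma tail_tl m : utail (code_seq m) = code_seq (tl m).
Proof. destruct m. reflexivity. apply tail_cons. Qed.
Lemma skipn_S_tl i (l : list (option nat)) : skipn (S i) l = tl (skipn i l).
Proof. induction l in i |- *; destruct i; try reflexivity. apply (IHl i). Qed.
Lemma uit_skipn i l : uit i (code_seq l) = code_seq (skipn i l).
Proof.
  induction i. reflexivity.
  unfold uit. cbn [pr2]. fold uit. rewrite IHi, tail_tl, skipn_S_tl. reflexivity.
Qed.
Lemma nth_error_skipn' i (l : list (option nat)) : nth_error l i = hd_error (skipn i l).
Proof. induction l in i |- *; destruct i; simpl; auto. Qed.
Lemma F3_spec i x l : F3 i x (code_seq l) = 0 <-> nth_error l i = Some (Some x).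
Proof.
  unfold F3. rewrite uit_skipn, nth_error_skipn'.
  destruct (skipn i l) as [|o m].
  - simpl. split; discriminate.
  - rewrite head_cons. simpl hd_error. cbn [code_seq isz].
    destruct o as [y|]; simpl enc_opt.
    + destruct (Nat.eq_dec y x). subst. rewrite !Nat.sub_diag. simpl. split; auto.
      replace (S y - S x + (S x - S y)) with (S (S y - S x + (S x - S y) - 1)) by lia.
      simpl. split; intros H; [discriminate|injection H; intros; congruence].
    + replace (0 - S x + (S x - 0)) with (S x) by lia. simpl. split; discriminate.
Qed.

Lemma somes_In x l : In x (somes l) <-> In (Some x) l.
Proof.
  induction l as [|[y|] l IH]; simpl; try tauto.
  rewrite IH. split; intros [H|H]; auto; left; congruence.
  rewrite IH. split; auto. intros [H|H]; auto; discriminate.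
Qed.
Definition Wp (T : text) i x := exists j, j < i /\ T j = Some x.
Lemma prefix_In T n x : In (Some x) (prefix T n) <-> Wp T n x.
Proof.
  unfold prefix, Wp. rewrite in_map_iff. split.
  - intros [j [E H]]. apply in_seq in H. exists j; split; [lia|auto].
  - intros [j [H E]]. exists j; split; auto. apply in_seq; lia.
Qed.

Fixpoint sumpow (l : list nat) := match l with [] => 0 | a :: l' => 2 ^ a + sumpow l' end.
Lemma sumpow_bits l : NoDup l -> forall y, Nat.testbit (sumpow l) y = true <-> In y l.
Proof.
  induction 1 as [|x0 l Hx0 Hnd IHNoDup]; intros x; simpl. rewrite Nat.bits_0. split; [discriminate|tauto].
  assert (Hl : Nat.land (2 ^ x0) (sumpow l) = 0).
  { apply Nat.bits_inj_0. intros m. rewrite Nat.land_spec.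
    destruct (Nat.eq_dec x0 m). subst. destruct (Nat.testbit (sumpow l) m) eqn:E.
    apply IHNoDup in E. contradiction. apply andb_false_r.
    rewrite Nat.pow2_bits_false by auto. reflexivity. }
  rewrite Nat.add_nocarry_lxor by exact Hl. rewrite Nat.lxor_spec.
  destruct (Nat.eq_dec x0 x).
  - subst. rewrite Nat.pow2_bits_true. destruct (Nat.testbit (sumpow l) x) eqn:E.
    apply IHNoDup in E. contradiction. simpl. tauto.
  - rewrite Nat.pow2_bits_false by auto. simpl. rewrite IHNoDup. intuition.
Qed.
Lemma canon_bits l x : Nat.testbit (canon_index l) x = true <-> In x (somes l).
Proof.
  unfold canon_index. replace (fold_right (fun x acc => 2 ^ x + acc) 0 (nodup Nat.eq_dec (somes l)))
    with (sumpow (nodup Nat.eq_dec (somes l))).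
  rewrite sumpow_bits by apply NoDup_nodup. apply nodup_In.
  induction (nodup Nat.eq_dec (somes l)); simpl; auto.
Qed.
Lemma canon_Wp T n x : Nat.testbit (canon_index (prefix T n)) x = true <-> Wp T n x.
Proof. rewrite canon_bits, somes_In, prefix_In. tauto. Qed.
Lemma seq_Wp T n x : (exists j, nth_error (prefix T n) j = Some (Some x)) <-> Wp T n x.
Proof.
  rewrite <- prefix_In. split. intros [j H]. eapply nth_error_In; eauto.
  intros H. apply In_nth_error in H. exact H.
Qed.

Lemma cover (T : text) s : (forall x, In x s -> exists j, T j = Some x) ->
  exists n0, forall x, In x s -> Wp T n0 x.
Proof.
  induction s as [|a s IH]; intros H. exists 0; intros x [].
  destruct IH as [n0 Hn0]. intros; apply H; simpl; auto.
  destruct (H a) as [j Hj]. simpl; auto.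
  exists (S (max n0 j)). intros x [E|Hx]. subst. exists j; split; [lia|auto].
  destruct (Hn0 x Hx) as [j' [Hj' E]]. exists j'; split; [lia|auto].
Qed.

Lemma Wp_content T n x : Wp T n x -> content T x.
Proof. intros [j [_ E]]. exists j; exact E. Qed.

Lemma caut_of psi (p : nat -> nat) T : (forall i x, W psi (p i) x <-> Wp T i x) -> CautTar psi p T.
Proof.
  intros H n [_ Hn]. apply Hn. intros x Hx. apply H in Hx. eapply Wp_content; eauto.
Qed.

Lemma eventually_full T L s : set_eq (content T) L -> (forall x, L x <-> In x s) ->
  exists n0, forall n, n0 <= n -> forall x, Wp T n x <-> content T x.
Proof.
  intros HT Hs. destruct (cover T s) as [n0 Hn0].
  { intros x Hx. apply Hs, HT in Hx. exact Hx. }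
  exists n0. intros n Hn x. split. apply Wp_content.
  intros Hc. apply HT, Hs, Hn0 in Hc. destruct Hc as [j [Hj E]]. exists j; split; [lia|auto].
Qed.

Lemma to_finite psi (beta : interaction) (delta : criterion) h L :
  (forall T T' p p' n, prefix T n = prefix T' n -> beta h T p -> beta h T' p' -> p n = p' n) ->
  (forall p T, delta p T -> exists n0, set_eq (W psi (p n0)) (content T)) ->
  learns (CautTar psi) beta delta h L -> finite_lang L.
Proof.
  intros Hdet Hdel [Hall HL].
  set (T := fun n => if excluded_middle_informative (L n) then Some n else None).
  assert (HT : set_eq (content T) L).
  { intros x; unfold content, T; split.
    - intros [n E]. destruct (excluded_middle_informative (L n)); congruence.
    - intros Hx. exists x. destruct (excluded_middle_informative (L x)); tauto. }
  destruct (HL T HT) as [p [Hb Hd]]. destruct (Hdel p T Hd) as [n0 Hn0].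
  set (T' := fun n => if n <? n0 then T n else None).
  assert (Hpre : prefix T n0 = prefix T' n0).
  { unfold prefix. apply map_ext_in. intros a Ha. apply in_seq in Ha. unfold T'.
    replace (a <? n0) with true by (symmetry; apply Nat.ltb_lt; lia). reflexivity. }
  destruct (Hall T') as [p' [Hb' Hc']].
  pose proof (Hdet _ _ _ _ _ Hpre Hb Hb') as Ep.
  assert (HT' : forall x, content T' x <-> Wp T n0 x).
  { intros x; unfold content, Wp, T'; split.
    - intros [j E]. destruct (j <? n0) eqn:Ej; [|discriminate]. apply Nat.ltb_lt in Ej. eauto.
    - intros [j [Hj E]]. exists j. replace (j <? n0) with true by (symmetry; apply Nat.ltb_lt; lia). exact E. }
  specialize (Hc' n0). rewrite <- Ep in Hc'.
  assert (Hsub : subset (W psi (p n0)) (content T')).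
  { apply NNPP. intros Hn. apply Hc'. split; auto.
    intros x Hx. apply Hn0. apply HT' in Hx. apply (Wp_content T n0 x Hx). }
  exists (somes (prefix T n0)). intros x. rewrite somes_In, prefix_In. split.
  - intros Hx. apply HT' , Hsub, Hn0, HT, Hx.
  - intros Hx. apply HT. eapply Wp_content; eauto.
Qed.

Lemma pre_canon T T' n : prefix T n = prefix T' n -> canon_index (prefix T n) = canon_index (prefix T' n).
Proof. intros E; rewrite E; reflexivity. Qed.

Lemma learner_ok sc (s : nat -> nat) (Hsc : forall x, eval sc [x] (s x)) Chk k :
  eval (C1 sc (cenc Chk)) [k] (s (encode (prog Chk k))).
Proof. eapply ev1; [apply ev_cenc|apply Hsc]. Qed.
Opaque Chk2 Chk3 encode cenc.
Lemma W_learner psi (s : nat -> nat) (Hs : forall e x y, phi e x y <-> psi (s e) x y) Chk F k x :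
  (forall i x, eval Chk [i;x;k] (F i x)) ->
  (W psi (s (encode (prog Chk k))) x <-> exists i, F i x = 0).
Proof. intros HF. rewrite (W_prog psi s Hs). apply prog_dom. exact HF. Qed.

Definition seqS (s : nat -> nat) (T : text) i := s (encode (prog Chk2 (canon_index (prefix T i)))).
Definition seqG (s : nat -> nat) (T : text) i := s (encode (prog Chk3 (code_seq (prefix T i)))).

Lemma seqS_beta sc s (Hsc : forall x, eval sc [x] (s x)) T : Sd_op (C1 sc (cenc Chk2)) T (seqS s T).
Proof. intros i. unfold seqS. apply (learner_ok sc s Hsc). Qed.
Lemma seqG_beta sc s (Hsc : forall x, eval sc [x] (s x)) T : G_op (C1 sc (cenc Chk3)) T (seqG s T).
Proof. intros i. unfold seqG. apply (learner_ok sc s Hsc). Qed.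

Lemma seqS_W psi s (Hs : forall e x y, phi e x y <-> psi (s e) x y) T i x :
  W psi (seqS s T i) x <-> Wp T i x.
Proof.
  unfold seqS.
  rewrite (W_learner psi s Hs Chk2 (fun _ x => isz ((canon_index (prefix T i) / 2 ^ x) mod 2))).
  2:{ intros; apply ev_chk2. }
  rewrite <- canon_Wp. split. intros [_ H]. apply chk2_spec, H.
  intros H. exists 0. apply chk2_spec, H.
Qed.
Lemma seqG_W psi s (Hs : forall e x y, phi e x y <-> psi (s e) x y) T i x :
  W psi (seqG s T i) x <-> Wp T i x.
Proof.
  unfold seqG.
  rewrite (W_learner psi s Hs Chk3 (fun j x => F3 j x (code_seq (prefix T i)))).
  2:{ intros; apply ev_chk3. }
  rewrite <- seq_Wp. split; intros [j H]; exists j; apply F3_spec, H.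
Qed.
Lemma seqS_stable s T n m : (forall x, Wp T n x <-> Wp T m x) -> seqS s T n = seqS s T m.
Proof.
  intros H. unfold seqS. assert (E : canon_index (prefix T n) = canon_index (prefix T m)).
  { apply Nat.bits_inj. intros x. apply eq_true_iff_eq. rewrite !canon_Wp. apply H. }
  rewrite E. reflexivity.
Qed.
Opaque seqS seqG.

Theorem theorem3 (psi : nat -> nat -> nat -> Prop) (Hpsi : acceptable psi)
  (Lcal : (nat -> Prop) -> Prop) :
  ((forall L, Lcal L -> finite_lang L) <->
     learnable (CautTar psi) Sd_op (Ex_crit psi) Lcal) /\
  ((forall L, Lcal L -> finite_lang L) <->
     learnable (CautTar psi) G_op (Bc_crit psi) Lcal).
Proof.
  destruct Hpsi as [_ [s [[sc Hsc] Hs]]].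
  split; split.
  - intros Hfin. exists (C1 sc (cenc Chk2)). intros L HLc.
    split.
    + intros T. exists (seqS s T). split. exact (seqS_beta sc s Hsc T).
      apply caut_of. intros; apply (seqS_W psi s Hs).
    + intros T HT. exists (seqS s T). split. exact (seqS_beta sc s Hsc T).
      destruct (Hfin L HLc) as [sl Hsl].
      destruct (eventually_full T L sl HT Hsl) as [n0 Hn0].
      exists n0. intros n Hn. split.
      * apply seqS_stable. intros x. rewrite (Hn0 n Hn), (Hn0 n0 (le_n n0)). tauto.
      * intros x. rewrite (seqS_W psi s Hs), (Hn0 n0 (le_n n0)). tauto.
  - intros [h Hh] L HL. apply (to_finite psi Sd_op (Ex_crit psi) h L).
    + intros T T' p p' n E Hb Hb'. apply (eval_det _ _ _ (Hb n)). rewrite (pre_canon T T' n E). apply Hb'.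
    + intros p T [n0 Hn0]. exists n0. apply (Hn0 n0). lia.
    + apply Hh, HL.
  - intros Hfin. exists (C1 sc (cenc Chk3)). intros L HLc.
    split.
    + intros T. exists (seqG s T). split. exact (seqG_beta sc s Hsc T).
      apply caut_of. intros; apply (seqG_W psi s Hs).
    + intros T HT. exists (seqG s T). split. exact (seqG_beta sc s Hsc T).
      destruct (Hfin L HLc) as [sl Hsl].
      destruct (eventually_full T L sl HT Hsl) as [n0 Hn0].
      exists n0. intros n Hn x. rewrite (seqG_W psi s Hs), (Hn0 n Hn). tauto.
  - intros [h Hh] L HL. apply (to_finite psi G_op (Bc_crit psi) h L).
    + intros T T' p p' n E Hb Hb'. apply (eval_det _ _ _ (Hb n)). rewrite E. apply Hb'.
    + intros p T [n0 Hn0]. exists n0. apply (Hn0 n0). lia.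
    + apply Hh, HL.
Qed.
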